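(* Suppose outcomes are observed under a balanced $K$-cluster randomized design $\mathcal{D}(\mathcal{C})$ and the potential outcomes have the form $Y_i(\mathbf{Z})=g_i(Z_i,e_i(\mathbf{Z}))$, where for each $i$ and each $Z\in\{-1,1\}$ the function $e\mapsto g_i(Z,e)$ is $L$-Lipschitz on $[-1,1]$ (with $L>0$). Then $$\left|\mathbb{E}[\widehat\tau_{DIM}]-\tau^*\right|\le \frac{2}{N}\cdot\frac{K}{K-1}\,L\,\mathcal{H}(\mathcal{C}),$$ where $\tau^*=\frac1N\sum_{i}\big(g_i(1,1)-g_i(-1,-1)\big)$. Furthermore, this bound is attained (by $g_i(Z,e)=Le$ for all $i$), and consequently, among all partitions of $[N]$ into $K$ equally sized clusters (with $K,K_T$ fixed), the set of minimizers of $\max_{\{g_i\}}\left|\mathbb{E}[\widehat\tau_{DIM}]-\tau^*\right|$, the maximum taken over all families $\{g_i\}$ of functions that are $L$-Lipschitz in $e$, equals the set of minimizers of $\mathcal{H}(\mathcal{C})$.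
   Context: Setting: $N$ experimental units $[N]$, $M$ interference units $[M]$, weights $w_{is}\ge0$ with $\sum_s w_{is}>0$ for all $i$ and $\sum_i w_{is}>0$ for all $s$. For $\mathbf{Z}\in\{-1,1\}^N$: dose $d_s=\frac{\sum_i w_{is}Z_i}{\sum_i w_{is}}$, exposure $e_i(\mathbf{Z})=\frac{\sum_s w_{is}d_s}{\sum_s w_{is}}\in[-1,1]$. Balanced $K$-cluster randomized design $\mathcal{D}(\mathcal{C})$: $K\ge2$ divides $N$, $\mathcal{C}$ partitions $[N]$ into $K$ clusters of size $N/K$, $\mathcal{C}(i)$ is the cluster of $i$; $K_T$ clusters ($0<K_T<K$) chosen uniformly at random are treated ($Z_i=1$), the rest are control ($Z_i=-1$). $N_T=NK_T/K$, $N_C=N-N_T$; $\widehat\tau_{DIM}=\frac{1}{N_T}\sum_{i:Z_i=1}Y_i-\frac{1}{N_C}\sum_{i:Z_i=-1}Y_i$. $\mathcal{H}(\mathcal{C})=\sum_{i\in[N]}\sum_{j\in[N]\setminus\mathcal{C}(i)}\sum_{s\in[M]}\frac{w_{is}}{\sum_{s'} w_{is'}}\frac{w_{js}}{\sum_{k} w_{ks}}$. *)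

(* Defs.v *)
From HB Require Import structures.
From mathcomp Require Import all_boot all_order all_algebra.
From mathcomp Require Import boolp classical_sets reals.
Set Implicit Arguments. Unset Strict Implicit. Unset Printing Implicit Defensive.
Import Order.TTheory GRing.Theory Num.Theory.
Local Open Scope ring_scope.
Local Open Scope classical_set_scope.

Section Defs.
Variables (R : realType) (N M K : nat).
Variable w : 'I_N -> 'I_M -> R.

Definition dose (Z : 'I_N -> R) (s : 'I_M) : R :=
  (\sum_(i < N) w i s * Z i) / (\sum_(i < N) w i s).

Definition exposure (Z : 'I_N -> R) (i : 'I_N) : R :=
  (\sum_(s < M) w i s * dose Z s) / (\sum_(s < M) w i s).

(* A clustering of [N] into K (labelled) clusters: cluster map C(i) := c i.
   It is balanced when every cluster has exactly N/K units. *)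
Definition balanced (c : 'I_N -> 'I_K) : Prop :=
  forall k : 'I_K, #|[set i | c i == k]| = (N %/ K)%N.

Definition assign (c : 'I_N -> 'I_K) (T : {set 'I_K}) : 'I_N -> R :=
  fun i => if c i \in T then 1 else -1.

Definition outcome (g : 'I_N -> R -> R -> R) (Z : 'I_N -> R) (i : 'I_N) : R :=
  g i (Z i) (exposure Z i).

Definition NT (KT : nat) : R := N%:R * KT%:R / K%:R.
Definition NC (KT : nat) : R := N%:R - NT KT.

Definition dim_est (KT : nat) (g : 'I_N -> R -> R -> R) (Z : 'I_N -> R) : R :=
  (NT KT)^-1 * (\sum_(i < N | Z i == 1) outcome g Z i)
  - (NC KT)^-1 * (\sum_(i < N | Z i == -1) outcome g Z i).

(* expectation of the estimator under D(C): K_T of the K clusters,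
   chosen uniformly at random, are treated *)
Definition expected_dim (c : 'I_N -> 'I_K) (KT : nat)
    (g : 'I_N -> R -> R -> R) : R :=
  (\sum_(T : {set 'I_K} | #|T| == KT) dim_est KT g (assign c T))
  / #|[set T : {set 'I_K} | #|T| == KT]|%:R.

Definition tau_star (g : 'I_N -> R -> R -> R) : R :=
  N%:R^-1 * \sum_(i < N) (g i 1 1 - g i (-1) (-1)).

Definition Hc (c : 'I_N -> 'I_K) : R :=
  \sum_(i < N) \sum_(j < N | c j != c i) \sum_(s < M)
     (w i s / \sum_(s' < M) w i s') * (w j s / \sum_(k < N) w k s).

Definition lipschitz_family (L : R) (g : 'I_N -> R -> R -> R) : Prop :=
  forall (i : 'I_N) (z : R), (z = 1 \/ z = -1) ->
  forall x y : R, -1 <= x <= 1 -> -1 <= y <= 1 ->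
    `|g i z x - g i z y| <= L * `|x - y|.

Definition bias (c : 'I_N -> 'I_K) (KT : nat) (g : 'I_N -> R -> R -> R) : R :=
  `|expected_dim c KT g - tau_star g|.

Definition worst_bias (c : 'I_N -> 'I_K) (KT : nat) (L : R) : R :=
  sup [set b | exists g, lipschitz_family L g /\ b = bias c KT g].

End Defs.

(* Main.v *)
Require Import Defs.
From HB Require Import structures.
From mathcomp Require Import all_boot all_order all_algebra.
From mathcomp Require Import boolp classical_sets reals.
From mathcomp Require Import ring lra zify.
Import Order.TTheory GRing.Theory Num.Theory.
Local Open Scope ring_scope.

Set Implicit Arguments. Unset Strict Implicit. Unset Printing Implicit Defensive.

Lemma binfacts (K KT : nat) : (2 <= K)%N -> (0 < KT < K)%N ->
  K%:R * ('C(K, KT)%:R - 'C(K - 1, KT)%:R) = KT%:R * 'C(K, KT)%:R :> int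
  /\ K%:R * (K%:R - 1) * ('C(K - 1, KT)%:R - 'C(K - 2, KT)%:R)
     = KT%:R * (K%:R - KT%:R) * 'C(K, KT)%:R :> int.
Proof.
case: K => [|[|n]] // _; case: KT => [|m] // hm.
rewrite !subSS !subn0.
have e1 : 'C(n.+2, m.+1) = ('C(n.+1, m.+1) + 'C(n.+1, m))%N by [].
have e2 : 'C(n.+1, m.+1) = ('C(n, m.+1) + 'C(n, m))%N by [].
have d1 := mul_bin_diag n.+2 m.
have d2 := mul_bin_down n.+1 m.
have hmn : (m <= n)%N by lia.
move: e1 e2 d1 d2 hmn.
rewrite -/(Nat.pred n.+2) -/(Nat.pred n.+1) /=.
generalize 'C(n.+2, m.+1) 'C(n.+1, m.+1) 'C(n.+1, m) 'C(n, m.+1) 'C(n, m).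
move=> a b c d e e1 e2 d1 d2 hmn.
split; nia.
Qed.

Section Main.
Variables (R : realType) (N M K KT : nat) (w : 'I_N -> 'I_M -> R).
Hypotheses (hw0 : forall i s, 0 <= w i s)
  (hwi : forall i, 0 < \sum_(s < M) w i s)
  (hws : forall s, 0 < \sum_(i < N) w i s).

Definition cc (i j : 'I_N) : R := \sum_(s < M)
  (w i s / \sum_(s' < M) w i s') * (w j s / \sum_(k < N) w k s).

Lemma cc_ge0 i j : 0 <= cc i j.
Proof.
apply: sumr_ge0 => s _; apply: mulr_ge0; apply: divr_ge0 => //; exact: ltW.
Qed.

Lemma exposureE Z i : exposure w Z i = \sum_j cc i j * Z j.
Proof.
rewrite /exposure /dose /cc.
under [RHS]eq_bigr => j _ do rewrite mulr_suml.
rewrite [RHS]exchange_big /= mulr_suml; apply: eq_bigr => s _.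
rewrite (mulrC (w i s)) -!mulrA mulr_suml; apply: eq_bigr => j _.
have h1 := hwi i; have h2 := hws s.
field; apply/andP; split; exact: lt0r_neq0.
Qed.

Lemma sum_cc i : \sum_j cc i j = 1.
Proof.
rewrite /cc exchange_big /=.
under eq_bigr => s _ do rewrite -mulr_sumr -mulr_suml divff ?mulr1 ?lt0r_neq0 //.
by rewrite -mulr_suml divff // lt0r_neq0.
Qed.

Definition ind (b : bool) : R := b%:R.

Lemma ind_ge0 b : 0 <= ind b. Proof. by case: b; rewrite /ind. Qed.

Lemma assignE (c : 'I_N -> 'I_K) (T : {set 'I_K}) j :
  assign R c T j = if c j \in T then 1 else -1.
Proof. by []. Qed.

Lemma tin_sub (c : 'I_N -> 'I_K) (T : {set 'I_K}) i :
  ind (c i \in T) * (1 - exposure w (assign R c T) i)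
  = 2 * \sum_(j | c j != c i) cc i j * (ind (c i \in T) * ind (c j \notin T)).
Proof.
rewrite exposureE -{1}(sum_cc i) -sumrB mulr_sumr mulr_sumr.
rewrite (bigID (fun j => c j == c i)) /= big1 ?add0r.
  apply: eq_bigr => j _; rewrite assignE /ind.
  by case: (c j \in T); case: (c i \in T); rewrite /= ?mulr1n ?mulr0n; ring.
move=> j /eqP hj; rewrite assignE hj /ind.
by case: (c i \in T); rewrite /= ?mulr1n ?mulr0n; ring.
Qed.

Lemma tout_add (c : 'I_N -> 'I_K) (T : {set 'I_K}) i :
  ind (c i \notin T) * (1 + exposure w (assign R c T) i)
  = 2 * \sum_(j | c j != c i) cc i j * (ind (c i \notin T) * ind (c j \in T)).
Proof.
rewrite exposureE -{1}(sum_cc i) -big_split mulr_sumr mulr_sumr.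
rewrite (bigID (fun j => c j == c i)) /= big1 ?add0r.
  apply: eq_bigr => j _; rewrite assignE /ind.
  by case: (c j \in T); case: (c i \in T); rewrite /= ?mulr1n ?mulr0n; ring.
move=> j /eqP hj; rewrite assignE hj /ind.
by case: (c i \in T); rewrite /= ?mulr1n ?mulr0n; ring.
Qed.

Lemma e_bounds Z i : (forall j, Z j = 1 \/ Z j = -1) ->
  -1 <= exposure w Z i <= 1.
Proof.
move=> hZ; rewrite exposureE; apply/andP; split.
  rewrite -subr_ge0 opprK -{1}(sum_cc i) -big_split; apply: sumr_ge0 => j _.
  have := cc_ge0 i j; case: (hZ j) => -> /=; nra.
rewrite -subr_ge0 -{1}(sum_cc i) -sumrB; apply: sumr_ge0 => j _.
have := cc_ge0 i j; case: (hZ j) => -> /=; nra.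
Qed.

Lemma sum_sub (A : {set 'I_K}) :
  \sum_(T : {set 'I_K} | #|T| == KT) ind (T \subset A) = 'C(#|A|, KT)%:R.
Proof.
rewrite -cards_draws -sumr_const big_mkcond [RHS]big_mkcond.
apply: eq_bigr => T _; rewrite inE /ind.
by case: (T \subset A); case: (#|T| == KT).
Qed.

Lemma sum_one : \sum_(T : {set 'I_K} | #|T| == KT) (1 : R) = 'C(K, KT)%:R.
Proof.
rewrite -[K in RHS]card_ord -cardsT -sum_sub; apply: eq_bigr => T _.
by rewrite finset.subsetT.
Qed.

Lemma sum_out k :
  \sum_(T : {set 'I_K} | #|T| == KT) ind (k \notin T) = 'C(K - 1, KT)%:R.
Proof.
have h (T : {set 'I_K}) : ind (k \notin T) = ind (T \subset ~: [set k]).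
  by rewrite finset.subsetC finset.sub1set finset.in_setC.
under eq_bigr => T _ do rewrite h.
by rewrite sum_sub cardsC1 card_ord subn1.
Qed.

Lemma sum_in k :
  \sum_(T : {set 'I_K} | #|T| == KT) ind (k \in T)
  = 'C(K, KT)%:R - 'C(K - 1, KT)%:R.
Proof.
rewrite -sum_one -(sum_out k) -sumrB; apply: eq_bigr => T _; rewrite /ind.
by case: (k \in T); rewrite /= ?mulr1n ?mulr0n; ring.
Qed.

Lemma sum_inout k l : k != l ->
  \sum_(T : {set 'I_K} | #|T| == KT) ind (k \in T) * ind (l \notin T)
  = 'C(K - 1, KT)%:R - 'C(K - 2, KT)%:R.
Proof.
move=> hkl.
have h (T : {set 'I_K}) : ind (k \in T) * ind (l \notin T)
    = ind (l \notin T) - ind (T \subset ~: [set k; l]).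
  rewrite finset.subsetC finset.subUset !finset.sub1set !finset.in_setC /ind.
  by case: (k \in T); case: (l \in T); rewrite /= ?mulr1n ?mulr0n; ring.
under eq_bigr => T _ do rewrite h.
rewrite sumrB sum_out sum_sub.
have := cardsC [set k; l]; rewrite cards2 hkl card_ord => hc.
by rewrite (_ : #|~: [set k; l]| = (K - 2)%N) //; lia.
Qed.

Hypotheses (hK : (2 <= K)%N) (hKT : (0 < KT < K)%N).

Lemma K_neq0 : (K%:R : R) != 0.
Proof. rewrite pnatr_eq0; apply/eqP; lia. Qed.

Lemma K1_neq0 : (K%:R - 1 : R) != 0.
Proof. rewrite subr_eq0 pnatr_eq1; apply/eqP; lia. Qed.

Lemma KT_neq0 : (KT%:R : R) != 0.
Proof. rewrite pnatr_eq0; apply/eqP; lia. Qed.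

Lemma KKT_neq0 : (K%:R - KT%:R : R) != 0.
Proof. rewrite subr_eq0 eqr_nat; apply/eqP; lia. Qed.

Definition CK : R := 'C(K, KT)%:R.
Definition rr : R := KT%:R * (K%:R - KT%:R) / (K%:R * (K%:R - 1)).

Lemma binR :
  K%:R * ('C(K, KT)%:R - 'C(K - 1, KT)%:R) = KT%:R * 'C(K, KT)%:R :> R
  /\ K%:R * (K%:R - 1) * ('C(K - 1, KT)%:R - 'C(K - 2, KT)%:R)
     = KT%:R * (K%:R - KT%:R) * 'C(K, KT)%:R :> R.
Proof.
have [h1 h2] := binfacts hK hKT.
have := congr1 (fun z : int => (z%:~R : R)) h1.
have := congr1 (fun z : int => (z%:~R : R)) h2.
rewrite /= !(rmorphM, rmorphB, rmorph_nat, rmorph1) => -> ->.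
by split.
Qed.

Lemma sum_in' k :
  \sum_(T : {set 'I_K} | #|T| == KT) ind (k \in T) = KT%:R / K%:R * CK.
Proof.
rewrite sum_in; apply: (mulfI K_neq0); rewrite binR.1 /CK.
by field; rewrite K_neq0.
Qed.

Lemma sum_out' k :
  \sum_(T : {set 'I_K} | #|T| == KT) ind (k \notin T) = (1 - KT%:R / K%:R) * CK.
Proof.
have := sum_in' k; rewrite sum_in sum_out /CK => h.
rewrite mulrBl mul1r -h; ring.
Qed.

Lemma sum_inout' k l : k != l ->
  \sum_(T : {set 'I_K} | #|T| == KT) ind (k \in T) * ind (l \notin T) = rr * CK.
Proof.
move=> hkl; rewrite sum_inout //.
have hne : (K%:R * (K%:R - 1) : R) != 0 by rewrite mulf_neq0 ?K_neq0 ?K1_neq0.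
apply: (mulfI hne); rewrite binR.2 /CK /rr.
by field; rewrite K_neq0 K1_neq0.
Qed.

Lemma sum_outin' k l : k != l ->
  \sum_(T : {set 'I_K} | #|T| == KT) ind (k \notin T) * ind (l \in T) = rr * CK.
Proof.
move=> hkl; rewrite -(sum_inout' (l:=k) (k:=l)) 1?eq_sym //.
by apply: eq_bigr => T _; rewrite mulrC.
Qed.

Hypothesis hN : (0 < N)%N.

Lemma N_neq0 : (N%:R : R) != 0.
Proof. rewrite pnatr_eq0; apply/eqP; lia. Qed.

Lemma CK_neq0 : CK != 0.
Proof. rewrite /CK pnatr_eq0 -lt0n bin_gt0; lia. Qed.

Lemma card_S : #|[set T : {set 'I_K} | #|T| == KT]%classic|%:R = CK :> R.
Proof.
rewrite -[X in X%:R = _](_ : #|[set T : {set 'I_K} | #|T| == KT]| = _).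
  by rewrite card_draws card_ord.
apply: eq_card => T; rewrite inE.
apply/idP/idP => [h | /set_mem //]; exact: mem_set.
Qed.

Definition ee (c : 'I_N -> 'I_K) (T : {set 'I_K}) i :=
  exposure w (assign R c T) i.

Lemma m1_neq1 : ((-1 : R) == 1) = false.
Proof. by apply/eqP; lra. Qed.

Lemma p1_neqm1 : ((1 : R) == -1) = false.
Proof. by apply/eqP; lra. Qed.

Lemma dim_estE (g : 'I_N -> R -> R -> R) (c : 'I_N -> 'I_K) (T : {set 'I_K}) : dim_est K w KT g (assign R c T)
  = (NT R N K KT)^-1 * \sum_i ind (c i \in T) * g i 1 (ee c T i)
  - (NC R N K KT)^-1 * \sum_i ind (c i \notin T) * g i (-1) (ee c T i).
Proof.
rewrite /dim_est /outcome /ee; congr (_ * _ - _ * _); rewrite big_mkcond;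
  apply: eq_bigr => i _; rewrite assignE /ind;
  case: (c i \in T); rewrite /= ?mulr1n ?mulr0n ?mul1r ?mul0r ?eqxx ?m1_neq1 ?p1_neqm1 //.
Qed.

Lemma sum_mulB (F G H : 'I_N -> R) :
  \sum_i F i * (G i - H i) = \sum_i F i * G i - \sum_i F i * H i.
Proof. by rewrite -sumrB; apply: eq_bigr => i _; rewrite mulrBr. Qed.

Lemma swapT (F : 'I_N -> {set 'I_K} -> R) (a : 'I_N -> R) :
  \sum_(T : {set 'I_K} | #|T| == KT) \sum_i F i T * a i
  = \sum_i (\sum_(T : {set 'I_K} | #|T| == KT) F i T) * a i.
Proof. by rewrite exchange_big; apply: eq_bigr => i _; rewrite mulr_suml. Qed.

Definition Xf (g : 'I_N -> R -> R -> R) (c : 'I_N -> 'I_K) (T : {set 'I_K}) : R :=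
  (NT R N K KT)^-1 * \sum_i ind (c i \in T) * (g i 1 (ee c T i) - g i 1 1)
  - (NC R N K KT)^-1 * \sum_i ind (c i \notin T) * (g i (-1) (ee c T i) - g i (-1) (-1)).

Definition Yf (c : 'I_N -> 'I_K) (T : {set 'I_K}) : R :=
  (NT R N K KT)^-1 * \sum_i ind (c i \in T) * (1 - ee c T i)
  + (NC R N K KT)^-1 * \sum_i ind (c i \notin T) * (1 + ee c T i).

Lemma bias_repr (g : 'I_N -> R -> R -> R) (c : 'I_N -> 'I_K) : expected_dim w c KT g - tau_star g
  = CK^-1 * \sum_(T : {set 'I_K} | #|T| == KT) Xf g c T.
Proof.
have hX (T : {set 'I_K}) : Xf g c T = dim_est K w KT g (assign R c T)
   - ((NT R N K KT)^-1 * \sum_i ind (c i \in T) * g i 1 1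
      - (NC R N K KT)^-1 * \sum_i ind (c i \notin T) * g i (-1) (-1)).
  rewrite dim_estE /Xf !sum_mulB; ring.
under eq_bigr => T _ do rewrite hX.
set A := \sum_i g i 1 1; set B := \sum_i g i (-1) (-1).
have hC : \sum_(T : {set 'I_K} | #|T| == KT)
   ((NT R N K KT)^-1 * \sum_i ind (c i \in T) * g i 1 1
      - (NC R N K KT)^-1 * \sum_i ind (c i \notin T) * g i (-1) (-1))
   = (NT R N K KT)^-1 * (KT%:R / K%:R * CK * A)
     - (NC R N K KT)^-1 * ((1 - KT%:R / K%:R) * CK * B).
  rewrite sumrB -!mulr_sumr.
  rewrite (swapT (fun i T => ind (c i \in T)) (fun i => g i 1 1)).
  rewrite (swapT (fun i T => ind (c i \notin T)) (fun i => g i (-1) (-1))).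
  rewrite /A /B; congr (_ * _ - _ * _); rewrite mulr_sumr;
    apply: eq_bigr => i _; by rewrite ?sum_in' ?sum_out'.
rewrite sumrB hC.
have hT : tau_star g = N%:R^-1 * (A - B) by rewrite /tau_star sumrB.
rewrite /expected_dim card_S hT.
set D := \sum_(T : {set 'I_K} | #|T| == KT) _.
rewrite /NC /NT.
have := CK_neq0; have := N_neq0; have := K_neq0; have := KT_neq0;
  have := KKT_neq0.
move=> h1 h2 h3 h4 h5.
field.
by rewrite h2 h3 h4 -mulrBr mulf_neq0 //=; exact: h1.
Qed.

Lemma swap2 (P : 'I_N -> 'I_N -> bool) (a : 'I_N -> 'I_N -> R)
    (f : 'I_N -> 'I_N -> {set 'I_K} -> R) :
  \sum_(T : {set 'I_K} | #|T| == KT) \sum_i 2 * \sum_(j | P i j) a i j * f i j T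
  = \sum_i 2 * \sum_(j | P i j) a i j * \sum_(T : {set 'I_K} | #|T| == KT) f i j T.
Proof.
rewrite exchange_big; apply: eq_bigr => i _; rewrite -mulr_sumr; congr (_ * _).
rewrite exchange_big; apply: eq_bigr => j _; by rewrite mulr_sumr.
Qed.

Lemma sumHc (c : 'I_N -> 'I_K) (x : R) :
  \sum_i 2 * \sum_(j | c j != c i) cc i j * x = 2 * x * Hc w c.
Proof.
rewrite /Hc mulr_sumr; apply: eq_bigr => i _.
rewrite -mulrA; congr (_ * _); rewrite mulr_sumr; apply: eq_bigr => j _.
by rewrite mulrC.
Qed.

Lemma sumY (c : 'I_N -> 'I_K) :
  CK^-1 * \sum_(T : {set 'I_K} | #|T| == KT) Yf c T
  = 2 / N%:R * (K%:R / (K%:R - 1)) * Hc w c.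
Proof.
rewrite /Yf /ee.
under eq_bigr => T _ do rewrite (eq_bigr _ (fun i _ => tin_sub c T i))
  (eq_bigr _ (fun i _ => tout_add c T i)).
rewrite big_split /= -!mulr_sumr !swap2.
under eq_bigr => i _ do under eq_bigr => j hj do rewrite sum_inout' 1?eq_sym //.
under [X in _ + _ * X]eq_bigr => i _ do
  under eq_bigr => j hj do rewrite sum_outin' 1?eq_sym //.
rewrite !sumHc /NC /NT /rr.
have := CK_neq0; have := N_neq0; have := K_neq0; have := KT_neq0;
  have := KKT_neq0; have := K1_neq0.
move=> h0 h1 h2 h3 h4 h5.
field.
by rewrite h0 h2 h3 h4 -mulrBr mulf_neq0 //=; exact: h5.
Qed.

Lemma NT_gt0 : 0 < NT R N K KT.
Proof.
rewrite /NT; apply: divr_gt0; last by rewrite ltr0n; lia.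
by apply: mulr_gt0; rewrite ltr0n; lia.
Qed.

Lemma NC_gt0 : 0 < NC R N K KT.
Proof.
rewrite /NC /NT (_ : N%:R * KT%:R / K%:R = N%:R * (KT%:R / K%:R)) ?mulrA //.
have hK0 : (0 : R) < K%:R by rewrite ltr0n; lia.
have : KT%:R / K%:R < (1 : R) by rewrite ltr_pdivrMr // mul1r ltr_nat; lia.
have : (0 : R) < N%:R by rewrite ltr0n.
move=> h1 h2; nra.
Qed.

Lemma Hc_ge0 (c : 'I_N -> 'I_K) : 0 <= Hc w c.
Proof.
apply: sumr_ge0 => i _; apply: sumr_ge0 => j _; exact: cc_ge0.
Qed.

Lemma ee_bounds (c : 'I_N -> 'I_K) (T : {set 'I_K}) i : -1 <= ee c T i <= 1.
Proof.
apply: e_bounds => j; rewrite assignE; case: (c j \in T); by [left|right].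
Qed.

Lemma m11 : ((-1 : R) <= 1) && ((1 : R) <= 1).
Proof. by rewrite lexx andbT; lra. Qed.
Lemma mm11 : ((-1 : R) <= -1) && ((-1 : R) <= 1).
Proof. by rewrite lexx /=; lra. Qed.

Lemma X_bound (L : R) (g : 'I_N -> R -> R -> R) (c : 'I_N -> 'I_K)
  (T : {set 'I_K}) : 0 <= L -> lipschitz_family L g ->
  `|Xf g c T| <= L * Yf c T.
Proof.
move=> hL hg.
have hNT := NT_gt0; have hNC := NC_gt0.
rewrite /Xf /Yf mulrDr.
apply: (le_trans (ler_normB _ _)); apply: lerD.
  rewrite normrM gtr0_norm ?invr_gt0 // mulrCA ler_pM2l ?invr_gt0 //.
  apply: (le_trans (ler_norm_sum _ _ _)); rewrite mulr_sumr; apply: ler_sum => i _.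
  have /andP[e1 e2] := ee_bounds c T i.
  have := hg i 1 (or_introl erefl) (ee c T i) 1 (ee_bounds c T i) m11.
  have hn : `|ee c T i - 1| = 1 - ee c T i.
    by rewrite distrC ger0_norm // subr_ge0.
  rewrite hn /ind.
  by case: (c i \in T); rewrite /= ?mulr1n ?mulr0n ?mul1r ?mul0r ?normr0 ?mulr0.
rewrite normrM gtr0_norm ?invr_gt0 // mulrCA ler_pM2l ?invr_gt0 //.
apply: (le_trans (ler_norm_sum _ _ _)); rewrite mulr_sumr; apply: ler_sum => i _.
have /andP[e1 e2] := ee_bounds c T i.
have := hg i (-1) (or_intror erefl) (ee c T i) (-1) (ee_bounds c T i) mm11.
have hn : `|ee c T i - -1| = 1 + ee c T i.
  by rewrite opprK addrC ger0_norm //; lra.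
rewrite hn /ind.
by case: (c i \in T); rewrite /= ?mulr1n ?mulr0n ?mul1r ?mul0r ?normr0 ?mulr0.
Qed.

Lemma CK_gt0 : 0 < CK.
Proof. rewrite /CK ltr0n bin_gt0; lia. Qed.

Lemma bias_bound (L : R) (g : 'I_N -> R -> R -> R) (c : 'I_N -> 'I_K) :
  0 <= L -> lipschitz_family L g ->
  bias w c KT g <= 2 / N%:R * (K%:R / (K%:R - 1)) * L * Hc w c.
Proof.
move=> hL hg; rewrite /bias bias_repr.
rewrite normrM gtr0_norm ?invr_gt0 ?CK_gt0 //.
rewrite (_ : _ * L * _ = L * (CK^-1 * \sum_(T : {set 'I_K} | #|T| == KT) Yf c T)); last first.
  by rewrite sumY; ring.
rewrite mulrCA ler_pM2l ?invr_gt0 ?CK_gt0 //.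
apply: (le_trans (ler_norm_sum _ _ _)); rewrite mulr_sumr; apply: ler_sum => T _.
exact: X_bound.
Qed.

Lemma bias_eq (L : R) (c : 'I_N -> 'I_K) : 0 <= L ->
  bias w c KT (fun _ _ e => L * e) = 2 / N%:R * (K%:R / (K%:R - 1)) * L * Hc w c.
Proof.
move=> hL; rewrite /bias bias_repr.
have hX T : Xf (fun _ _ e => L * e) c T = - (L * Yf c T).
  rewrite /Xf /Yf.
  have h1 : \sum_i ind (c i \in T) * (L * ee c T i - L * 1)
      = - L * \sum_i ind (c i \in T) * (1 - ee c T i).
    by rewrite mulr_sumr; apply: eq_bigr => i _; ring.
  have h2 : \sum_i ind (c i \notin T) * (L * ee c T i - L * -1)
      = L * \sum_i ind (c i \notin T) * (1 + ee c T i).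
    by rewrite mulr_sumr; apply: eq_bigr => i _; ring.
  rewrite h1 h2; ring.
under eq_bigr => T _ do rewrite hX.
rewrite sumrN -mulr_sumr mulrN normrN mulrCA sumY.
have hN0 : (0 : R) < N%:R by rewrite ltr0n.
have hK1 : (0 : R) < K%:R - 1.
  by rewrite subr_gt0 (_ : (1 : R) = 1%:R) // ltr_nat; lia.
rewrite ger0_norm; first by ring.
apply: mulr_ge0 => //; apply: mulr_ge0; last exact: Hc_ge0.
apply: mulr_ge0; first by apply: divr_ge0 => //; exact: ltW.
by apply: divr_ge0; [rewrite ler0n | exact: ltW].
Qed.

End Main.

Theorem lemma3 (R : realType) (N M K KT : nat) (w : 'I_N -> 'I_M -> R) (L : R)
  (hw0 : forall i s, 0 <= w i s)
  (hwi : forall i, 0 < \sum_(s < M) w i s)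
  (hws : forall s, 0 < \sum_(i < N) w i s)
  (hK : (2 <= K)%N) (hKN : (K %| N)%N) (hKT : (0 < KT < K)%N) (hL : 0 < L) :
  (forall c : 'I_N -> 'I_K, balanced c ->
     forall g, lipschitz_family L g ->
       bias w c KT g <= 2 / N%:R * (K%:R / (K%:R - 1)) * L * Hc w c)
  /\
  (forall c : 'I_N -> 'I_K, balanced c ->
       bias w c KT (fun _ _ e => L * e)
       = 2 / N%:R * (K%:R / (K%:R - 1)) * L * Hc w c)
  /\
  (forall c : 'I_N -> 'I_K, balanced c ->
     ((forall c' : 'I_N -> 'I_K, balanced c' ->
         worst_bias w c KT L <= worst_bias w c' KT L)
      <->
      (forall c' : 'I_N -> 'I_K, balanced c' -> Hc w c <= Hc w c'))).
Proof.
pose B (c : 'I_N -> 'I_K) := 2 / N%:R * (K%:R / (K%:R - 1)) * L * Hc w c.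
have hL0 : 0 <= L by exact: ltW.
have [Hb He] : (forall (c : 'I_N -> 'I_K) (g : 'I_N -> R -> R -> R), lipschitz_family L g -> bias w c KT g <= B c) /\
               (forall c : 'I_N -> 'I_K, bias w c KT (fun _ _ e => L * e) = B c).
  have [N0 | hN] := posnP N; last first.
    split=> [c g hg|c]; [exact: bias_bound | exact: bias_eq].
  subst N.
  have hE : forall (F : 'I_0 -> R) (P : pred 'I_0), \sum_(i | P i) F i = 0.
    by move=> F P; rewrite big1 // => -[].
  have B0 : forall (c : 'I_0 -> 'I_K) (g : 'I_0 -> R -> R -> R), bias w c KT g = 0.
    move=> c g; rewrite /bias.
    have -> : tau_star g = 0 by rewrite /tau_star hE mulr0.
    rewrite /bias /expected_dim subr0.
    rewrite big1 ?mul0r ?normr0 // => T _; rewrite /dim_est !hE.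
    by rewrite !mulr0 subr0.
  have H0 : forall c : 'I_0 -> 'I_K, B c = 0 by move=> c; rewrite /B /Hc hE mulr0.
  by split=> [c g _|c]; rewrite B0 H0.
have hg0 : lipschitz_family L (fun _ _ e => L * e).
  by move=> i z hz x y hx hy; rewrite -mulrBr normrM gtr0_norm.
have Hw : forall c : 'I_N -> 'I_K, worst_bias w c KT L = B c.
  move=> c; apply/le_anti/andP; split.
    apply: ge_sup.
      by exists (bias w c KT (fun _ _ e => L * e)); exists (fun _ _ e => L * e).
    by move=> y [g [hg ->]]; exact: Hb.
  rewrite -He; apply: ub_le_sup.
    by exists (B c) => y [g [hg ->]]; exact: Hb.
  by exists (fun _ _ e => L * e).
split; first by move=> c _ g hg; exact: Hb.
split; first by move=> c _; exact: He.
move=> c _; have [N0 | hN] := posnP N.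
  subst N.
  have H0 : forall c : 'I_0 -> 'I_K, Hc w c = 0.
    by move=> c0; rewrite /Hc big1 // => -[].
  by split=> _ c' _; rewrite ?Hw /B !H0.
have hk : 0 < 2 / N%:R * (K%:R / (K%:R - 1)) * L.
  have hK1 : (0 : R) < K%:R - 1.
    by rewrite subr_gt0 (_ : (1 : R) = 1%:R) // ltr_nat; lia.
  apply: mulr_gt0 => //; apply: mulr_gt0; apply: divr_gt0 => //.
    by rewrite ltr0n.
  by rewrite ltr0n; lia.
split=> h c' hc'; have := h c' hc'; rewrite ?Hw /B ler_pM2l //.
Qed.
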